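(* For every set $V \subset \mathcal{A}_0$ we have $$V^* = \overline{(\mathrm{cm}(V))^T},$$ where the closure is taken in the space $\mathcal{A}$ (topology of locally uniform convergence in $D$).
   Context: $D=\{z:|z|<1\}$, $\overline D$ its closure. $\mathcal{A}$ is the space of functions $f(z)=\sum_{k\ge0}a_k(f)z^k$ analytic in $D$, with the topology of locally uniform convergence; $\mathcal{A}_0=\{f\in\mathcal{A}: a_0(f)=1\}$. $\mathcal{A}(\overline D)$ is the set of functions analytic in some disk $\{|z|<R\}$ with $R>1$, and $\mathcal{A}_0(\overline D)=\{g\in\mathcal{A}(\overline D):a_0(g)=1\}$. The Hadamard product is $(f*g)(z)=\sum_{k\ge0}a_k(f)a_k(g)z^k$. For $V\subset\mathcal{A}_0$, the dual is $V^*=\{g\in\mathcal{A}_0:(f*g)(z)\ne0 \text{ for all } z\in D,\ f\in V\}$. For $x\in\overline D$, $(P_xf)(z)=f(xz)$, and the complete hull is $\mathrm{cm}(V)=\{P_xf: f\in V,\ x\in\overline D\}$. For $V\subset\mathcal{A}_0$, $V^T=\{g\in\mathcal{A}_0(\overline D): (f*g)(1)\ne0 \text{ for all } f\in V\}$. *)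

(* Defs.v *)
From Stdlib Require Import Reals.
From Coquelicot Require Import Coquelicot.
Open Scope R_scope.

(* A function analytic in D is represented by its Taylor coefficient sequence
   a : nat -> C ;  f(z) = sum_k a_k z^k. *)
Definition coeffs := nat -> C.

Definition sums_to (a : coeffs) (z w : C) : Prop :=
  is_series (fun k => Cmult (a k) (Cpow z k)) w.

Definition in_A (a : coeffs) : Prop :=
  forall z : C, Cmod z < 1 -> ex_series (fun k => Cmult (a k) (Cpow z k)).

Definition in_A0 (a : coeffs) : Prop := in_A a /\ a 0%nat = RtoC 1.

Definition in_Abar (a : coeffs) : Prop :=
  exists R : R, 1 < R /\
    forall z : C, Cmod z < R -> ex_series (fun k => Cmult (a k) (Cpow z k)).

Definition in_A0bar (a : coeffs) : Prop := in_Abar a /\ a 0%nat = RtoC 1.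

Definition hadamard (a b : coeffs) : coeffs := fun k => Cmult (a k) (b k).

Definition dual (V : coeffs -> Prop) (g : coeffs) : Prop :=
  in_A0 g /\
  forall f, V f -> forall z : C, Cmod z < 1 ->
    forall w, sums_to (hadamard f g) z w -> w <> RtoC 0.

(* (P_x f)(z) = f(xz) *)
Definition Pmap (x : C) (a : coeffs) : coeffs := fun k => Cmult (a k) (Cpow x k).

Definition cm (V : coeffs -> Prop) (g : coeffs) : Prop :=
  exists f x, V f /\ Cmod x <= 1 /\ g = Pmap x f.

Definition Tset (V : coeffs -> Prop) (g : coeffs) : Prop :=
  in_A0bar g /\
  forall f, V f -> forall w, sums_to (hadamard f g) (RtoC 1) w -> w <> RtoC 0.

(* Closure in A for the topology of locally uniform convergence in D:
   g in A is in the closure of S iff every basic neighbourhood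
   {h : sup_{|z|<=r} |h(z) - g(z)| < eps} (0 <= r < 1, eps > 0) meets S.
   (Every compact subset of D lies in some closed disk |z| <= r, r < 1.) *)
Definition closure_A (S : coeffs -> Prop) (g : coeffs) : Prop :=
  in_A g /\
  forall r eps : R, 0 <= r < 1 -> 0 < eps ->
    exists h, S h /\ in_A h /\
      forall z : C, Cmod z <= r ->
        forall u v, sums_to h z u -> sums_to g z v -> Cmod (Cminus u v) < eps.

(* Main.v *)
Require Import Defs.
From Stdlib Require Import Reals.
From Coquelicot Require Import Coquelicot.
From Stdlib Require Import Lra Lia Psatz ClassicalEpsilon Classical.
From HB Require Import structures.
From mathcomp Require ssreflect ssrfun ssrbool eqtype ssrnat seq order ssralg ssrnum interval.
From mathcomp Require boolp classical_sets reals topology normedtype derive Rstruct Rstruct_topology.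

Module MC.
Import ssreflect ssrfun ssrbool eqtype ssrnat order ssralg ssrnum interval.
Import boolp classical_sets reals topology normedtype derive Rstruct Rstruct_topology.
Import Order.TTheory GRing.Theory Num.Theory.
Local Open Scope classical_set_scope.
Local Open Scope R_scope.

Lemma ballR (x y e : R) : ball x e y <-> Rabs (y - x) < e.
Proof.
rewrite /ball /= -(Rabs_minus_sym x y).
have -> : Num.norm (GRing.add x (GRing.opp y)) = Rabs (x - y) by [].
split; [move/RltP; exact|move=> h; apply/RltP; exact h].
Qed.

Lemma min_attain (K : R*R -> Prop) (f : R*R -> R) (M : R) :
  (exists p, K p) ->
  (forall p, K p -> Rabs (fst p) <= M /\ Rabs (snd p) <= M) ->
  (forall p, (forall e, 0 < e -> exists q, K q /\ Rabs (fst q - fst p) < e /\ Rabs (snd q - snd p) < e) -> K p) ->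
  (forall p, K p -> forall e, 0 < e -> exists d, 0 < d /\ forall q, K q -> Rabs (fst q - fst p) < d -> Rabs (snd q - snd p) < d -> Rabs (f q - f p) < e) ->
  exists c, K c /\ forall t, K t -> f c <= f t.
Proof.
move=> [p0 Kp0] Kb Kc fc.
set A : set (R * R)%type := K.
have A0 : A !=set0 by exists p0.
have := compact_setX (@segment_compact _ (-M) M) (@segment_compact _ (-M) M).
set Q := (X in compact X) => cQ.
have clA : closed A.
  move=> p clp; apply: Kc => e e0.
  have e0' : is_true (Order.lt 0 e) by apply/RltP.
  have [q [Aq bq]] := clp _ (nbhsx_ballx p e e0').
  exists q; split => //.
  case: bq => /ballR b1 /ballR b2; split; assumption.
have AQ : A = Q `&` A.
  rewrite eqEsubset; split => [z Aq|z [] //]; split => //.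
  have [h1 h2] := Kb z Aq.
  split; rewrite /= in_itv /=; apply/andP; split; apply/RleP; rewrite -?RoppE;
   move: h1 h2 => /Rabs_le_between h1 /Rabs_le_between h2; lra.
have cA : compact A by rewrite AQ; apply: compact_closedI.
have cf : {within A, continuous f}.
  apply/subspace_continuousP => x Ax.
  move=> B /nbhs_ballP [e e0 eB].
  have e1 : 0 < e by apply/RltP.
  have [d [d0 hd]] := fc x Ax e e1.
  have d0' : is_true (Order.lt 0 d) by apply/RltP.
  rewrite /within /=; apply/nbhs_ballP; exists d => // z [b1 b2] Aq.
  apply: eB; apply/ballR; apply: hd => //; apply/ballR; assumption.
have [c Ac minf] := compact_EVT_min A0 cA cf.
exists c; split; first by move: Ac; rewrite inE.
move=> t Kt; apply/RleP; apply: minf; rewrite inE; exact: Kt.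
Qed.
End MC.


Open Scope R_scope.


Ltac Cring := match goal with |- ?a = ?b => change (@eq C a b); ring end.

Lemma is_series_C_uniq (u : nat -> C) l1 l2 :
  is_series u l1 -> is_series u l2 -> l1 = l2.
Proof. intros H1 H2. exact (filterlim_locally_unique _ _ _ H1 H2). Qed.

Definition csum (u : nat -> C) : C :=
  epsilon (inhabits (RtoC 0)) (fun l => is_series u l).

Lemma csum_correct u : ex_series u -> is_series u (csum u).
Proof. intros [l H]. unfold csum. apply epsilon_spec. exists l. exact H. Qed.

Lemma CnormE (x : C) : @norm C_AbsRing C_NormedModule x = Cmod x.
Proof. reflexivity. Qed.

Lemma sum_n_Rle (a b : nat -> R) n :
  (forall k, a k <= b k) -> sum_n a n <= sum_n b n.
Proof.
  intros H. induction n.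
  - rewrite !sum_O. apply H.
  - rewrite !sum_Sn. unfold plus; simpl. specialize (H (S n)). lra.
Qed.

Lemma Cmod_sum_n (u : nat -> C) n :
  Cmod (sum_n u n) <= sum_n (fun k => Cmod (u k)) n.
Proof.
  unfold sum_n. rewrite <- CnormE.
  eapply Rle_trans. apply (@norm_sum_n_m C_AbsRing C_NormedModule).
  right. apply sum_n_m_ext. intros. apply CnormE.
Qed.

Lemma series_Cmod_le (u : nat -> C) l (b : nat -> R) :
  is_series u l -> (forall n, Cmod (u n) <= b n) -> ex_series b ->
  Cmod l <= Series b.
Proof.
  intros Hu Hb Heb.
  assert (H1 : is_lim_seq (fun n => Cmod (sum_n u n)) (Cmod l)).
  { unfold is_lim_seq. simpl.
    eapply filterlim_ext. intros n. apply CnormE.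
    rewrite <- CnormE.
    eapply filterlim_comp. exact Hu. apply filterlim_norm. }
  assert (H2 : is_lim_seq (sum_n b) (Series b)).
  { apply Series_correct in Heb. exact Heb. }
  assert (H3 := is_lim_seq_le _ _ _ _ (fun n => Rle_trans _ _ _ (Cmod_sum_n u n) (sum_n_Rle _ _ n Hb)) H1 H2).
  exact H3.
Qed.

Lemma ex_series_C_le (u : nat -> C) (b : nat -> R) :
  (forall n, Cmod (u n) <= b n) -> ex_series b -> ex_series u.
Proof.
  intros Hb Heb. apply (ex_series_le u b). intros n. rewrite CnormE. apply Hb. exact Heb.
Qed.

Lemma series_terms_bounded (u : nat -> C) :
  ex_series u -> exists M, forall n, Cmod (u n) <= M.
Proof.
  intros [l Hl].
  destruct (filterlim_bounded (sum_n u)) as [M HM].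
  { exists l. exact Hl. }
  exists (2 * M). intros n. destruct n.
  - specialize (HM 0%nat). rewrite sum_O in HM. change (Cmod (u 0%nat) <= M) in HM.
    assert (0 <= Cmod (u 0%nat)) by apply Cmod_ge_0. lra.
  - assert (E : u (S n) = Cminus (sum_n u (S n)) (sum_n u n)).
    { rewrite sum_Sn. change (plus (sum_n u n) (u (S n))) with (Cplus (sum_n u n) (u (S n))). generalize (sum_n u n) (u (S n)). intros x y. ring. }
    rewrite E. unfold Cminus. eapply Rle_trans. apply Cmod_triangle.
    rewrite Cmod_opp. generalize (HM (S n)) (HM n). intros h1 h2.
    change (Cmod (sum_n u (S n)) <= M) in h1. change (Cmod (sum_n u n) <= M) in h2. lra.
Qed.


Lemma Cmod_term (c : C) (z : C) k : Cmod (c * z ^ k)%C = Cmod c * Cmod z ^ k.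
Proof. rewrite Cmod_mult, Cmod_pow. reflexivity. Qed.

Lemma Cmod_RtoC_pos (r : R) : 0 <= r -> Cmod (RtoC r) = r.
Proof. intros. rewrite Cmod_R. apply Rabs_pos_eq. auto. Qed.

Lemma Rpow_div_l (x y : R) n : y <> 0 -> (x / y) ^ n = x ^ n / y ^ n.
Proof.
  intros Hy. induction n. simpl. field. simpl. rewrite IHn. field.
  split. apply pow_nonzero; auto. auto.
Qed.

Lemma Rdiv_lt_1 (a b : R) : 0 < b -> a < b -> a / b < 1.
Proof. intros Hb Hab. apply (Rmult_lt_reg_r b); [lra|]. unfold Rdiv. rewrite Rmult_assoc, Rinv_l; lra. Qed.

Lemma ex_series_Rscal_l (c : R) (a : nat -> R) :
  ex_series a -> ex_series (fun n => c * a n).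
Proof.
  intros H. eapply ex_series_ext; [|apply (ex_series_scal_r c a H)].
  intros n. simpl. ring.
Qed.

Lemma ex_series_Rpos_le (a b : nat -> R) :
  (forall k, 0 <= a k <= b k) -> ex_series b -> ex_series a.
Proof.
  intros H Hb. apply (ex_series_le a b). intros n.
  change (Rabs (a n) <= b n). rewrite Rabs_pos_eq; apply H. exact Hb.
Qed.

Lemma geom_dom (a : nat -> R) (s r M : R) :
  (forall k, 0 <= a k) -> (forall k, a k * s ^ k <= M) -> 0 <= r < s ->
  ex_series (fun k => a k * r ^ k).
Proof.
  intros Ha HM Hr.
  apply (ex_series_Rpos_le _ (fun k => M * (r / s) ^ k)).
  - intros k. split.
    + apply Rmult_le_pos. apply Ha. apply pow_le. lra.
    + assert (E : a k * r ^ k = (a k * s ^ k) * (r / s) ^ k).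
      { rewrite Rpow_div_l by lra. field. apply pow_nonzero. lra. }
      rewrite E. apply Rmult_le_compat_r. apply pow_le.
      apply Rdiv_le_0_compat; lra. apply HM.
  - apply ex_series_Rscal_l. apply ex_series_geom.
    rewrite Rabs_pos_eq. apply Rdiv_lt_1; lra. apply Rdiv_le_0_compat; lra.
Qed.

Lemma inA_bound (c : coeffs) (s : R) : in_A c -> 0 <= s < 1 ->
  exists M, forall k, Cmod (c k) * s ^ k <= M.
Proof.
  intros Hc Hs. destruct (series_terms_bounded _ (Hc (RtoC s) ltac:(rewrite Cmod_RtoC_pos; lra))) as [M HM].
  exists M. intros k. specialize (HM k). rewrite Cmod_term, Cmod_RtoC_pos in HM by lra. exact HM.
Qed.

Definition ac (c : coeffs) (r : R) := ex_series (fun k => Cmod (c k) * r ^ k).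

Lemma inA_ac (c : coeffs) r : in_A c -> 0 <= r < 1 -> ac c r.
Proof.
  intros Hc Hr. destruct (inA_bound c ((r+1)/2) Hc ltac:(lra)) as [M HM].
  apply (geom_dom _ ((r+1)/2) r M). intros; apply Cmod_ge_0. exact HM. lra.
Qed.

Lemma ac_mono (c : coeffs) r R0 : ac c R0 -> 0 <= r <= R0 -> ac c r.
Proof.
  intros H Hr. apply (ex_series_Rpos_le _ _ ) with (2 := H). intros k. split.
  apply Rmult_le_pos. apply Cmod_ge_0. apply pow_le; lra.
  apply Rmult_le_compat_l. apply Cmod_ge_0. apply pow_incr; lra.
Qed.

Lemma ac_ex (c : coeffs) R0 z : ac c R0 -> Cmod z <= R0 ->
  ex_series (fun k => (c k * z ^ k)%C).
Proof.
  intros H Hz. apply (ex_series_C_le _ _ ) with (2 := H). intros k.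
  rewrite Cmod_term. apply Rmult_le_compat_l. apply Cmod_ge_0.
  apply pow_incr. split. apply Cmod_ge_0. exact Hz.
Qed.

Definition val (c : coeffs) (z : C) : C := csum (fun k => (c k * z ^ k)%C).

Lemma ac_val (c : coeffs) R0 z : ac c R0 -> Cmod z <= R0 -> sums_to c z (val c z).
Proof. intros H Hz. apply csum_correct. eapply ac_ex; eauto. Qed.

Lemma sums_uniq c z l1 l2 : sums_to c z l1 -> sums_to c z l2 -> l1 = l2.
Proof. apply is_series_C_uniq. Qed.

Lemma sums_bound (c : coeffs) z l R0 : sums_to c z l -> ac c R0 -> Cmod z <= R0 ->
  Cmod l <= Series (fun k => Cmod (c k) * R0 ^ k).
Proof.
  intros Hl H Hz. apply (series_Cmod_le _ _ _ Hl) ; [|exact H].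
  intros k. rewrite Cmod_term. apply Rmult_le_compat_l. apply Cmod_ge_0.
  apply pow_incr. split. apply Cmod_ge_0. exact Hz.
Qed.

Lemma had_ac (f g : coeffs) r : in_A f -> in_A g -> 0 <= r < 1 -> ac (hadamard f g) r.
Proof.
  intros Hf Hg Hr. set (R1 := (1 + r) / 2).
  destruct (inA_bound f R1 Hf ltac:(unfold R1; lra)) as [M1 HM1].
  destruct (inA_bound g R1 Hg ltac:(unfold R1; lra)) as [M2 HM2].
  apply (geom_dom _ (R1 * R1) r (M1 * M2)).
  - intros; apply Cmod_ge_0.
  - intros k. unfold hadamard. rewrite Cmod_mult, Rpow_mult_distr.
    replace (Cmod (f k) * Cmod (g k) * (R1 ^ k * R1 ^ k)) with
      ((Cmod (f k) * R1 ^ k) * (Cmod (g k) * R1 ^ k)) by ring.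
    apply Rmult_le_compat; try apply HM1; try apply HM2;
      apply Rmult_le_pos; try apply Cmod_ge_0; apply pow_le; unfold R1; lra.
  - unfold R1. nra.
Qed.

Fixpoint gsum (t : R) (k : nat) : R :=
  match k with O => 0 | S k' => gsum t k' + t ^ k' end.

Lemma kpow_bound (t : R) k : 0 <= t < 1 -> INR k * t ^ k <= / (1 - t).
Proof.
  intros Ht.
  assert (H1 : forall k, INR k * t ^ k <= gsum t k).
  { induction k0. simpl. lra. rewrite S_INR. simpl.
    assert (t ^ k0 * t <= t ^ k0 * 1) by (apply Rmult_le_compat_l; [apply pow_le|]; lra).
    assert (0 <= INR k0) by apply pos_INR.
    assert (INR k0 * (t * t ^ k0) <= INR k0 * t ^ k0) by (apply Rmult_le_compat_l; nra).
    nra. }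
  assert (H2 : forall k, (1 - t) * gsum t k = 1 - t ^ k).
  { induction k0. simpl. ring. simpl. rewrite Rmult_plus_distr_l, IHk0. ring. }
  specialize (H1 k). specialize (H2 k).
  assert (0 <= t ^ k) by (apply pow_le; lra).
  apply Rle_trans with (1 := H1).
  apply (Rmult_le_reg_l (1 - t)). lra. rewrite H2. rewrite Rinv_r by lra. lra.
Qed.

Lemma inA_kac (c : coeffs) r : in_A c -> 0 <= r < 1 ->
  ex_series (fun k => INR k * Cmod (c k) * r ^ k).
Proof.
  intros Hc Hr. set (rho := (r + 1) / 2). set (rho1 := (r + rho) / 2).
  destruct (inA_bound c rho Hc ltac:(unfold rho; lra)) as [M HM].
  apply (geom_dom _ rho1 r (M * / (1 - rho1 / rho))).
  - intros k. apply Rmult_le_pos. apply pos_INR. apply Cmod_ge_0.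
  - intros k.
    assert (E : INR k * Cmod (c k) * rho1 ^ k = (Cmod (c k) * rho ^ k) * (INR k * (rho1 / rho) ^ k)).
    { rewrite Rpow_div_l. field. apply pow_nonzero. unfold rho; lra. unfold rho; lra. }
    rewrite E. apply Rmult_le_compat.
    + apply Rmult_le_pos. apply Cmod_ge_0. apply pow_le; unfold rho; lra.
    + apply Rmult_le_pos. apply pos_INR. apply pow_le. apply Rdiv_le_0_compat; unfold rho1, rho; lra.
    + apply HM.
    + apply kpow_bound. split. apply Rdiv_le_0_compat; unfold rho1, rho; lra.
      apply Rdiv_lt_1; unfold rho1, rho; lra.
  - unfold rho1, rho; lra.
Qed.

Lemma bernoulli_le (s : R) k : 0 <= s <= 1 -> 1 - s ^ k <= INR k * (1 - s).
Proof.
  intros Hs. induction k. simpl. lra. rewrite S_INR. simpl.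
  assert (0 <= s ^ k <= 1) by (split; [apply pow_le; lra| rewrite <- (pow1 k); apply pow_incr; lra]).
  nra.
Qed.


Lemma Series_nonneg (b : nat -> R) : (forall n, 0 <= b n) -> ex_series b -> 0 <= Series b.
Proof.
  intros H Hb. replace 0 with (0 * Series b) by ring. rewrite <- Series_scal_l.
  apply Series_le; [|exact Hb]. intros n. specialize (H n). split; lra.
Qed.

Lemma dual_closure (V : coeffs -> Prop) (g : coeffs) :
  dual V g -> closure_A (Tset (cm V)) g.
Proof.
  intros [[HgA Hg0] Hg].
  split; [exact HgA|].
  intros r eps Hr Heps.
  set (K := Series (fun k => INR k * Cmod (g k) * r ^ k)).
  assert (HKe := inA_kac g r HgA Hr).
  assert (HK : 0 <= K).
  { apply Series_nonneg; [|exact HKe]. intros n. apply Rmult_le_pos.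
    apply Rmult_le_pos. apply pos_INR. apply Cmod_ge_0. apply pow_le; lra. }
  set (d := Rmin (1/2) (eps / (2 * (K + 1)))).
  assert (Hd1 : 0 < d).
  { unfold d. apply Rmin_glb_lt. lra. apply Rdiv_lt_0_compat; lra. }
  assert (Hd2 : d <= 1/2) by apply Rmin_l.
  assert (Hd3 : d <= eps / (2 * (K + 1))) by apply Rmin_r.
  set (s := 1 - d).
  assert (Hs : 0 < s < 1) by (unfold s; lra).
  exists (Pmap (RtoC s) g).
  assert (HA : in_A0bar (Pmap (RtoC s) g)).
  { split.
    - exists (/ s). split.
      + rewrite <- Rinv_1. apply Rinv_lt_contravar; lra.
      + intros z Hz.
        assert (Hsz : Cmod (RtoC s * z)%C < 1).
        { rewrite Cmod_mult, Cmod_RtoC_pos by lra.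
          apply (Rmult_lt_reg_l (/ s)). apply Rinv_0_lt_compat; lra.
          rewrite <- Rmult_assoc, Rinv_l, Rmult_1_l, Rmult_1_r by lra. exact Hz. }
        eapply ex_series_ext; [|apply (HgA _ Hsz)].
        intros k. simpl. unfold Pmap. rewrite Cpow_mult_l. Cring.
    - unfold Pmap. rewrite Hg0. simpl. ring. }
  split; [|split].
  - split; [exact HA|].
    intros f [f0 [x [Vf0 [Hx ->]]]] w Hw.
    apply (Hg f0 Vf0 (x * RtoC s)%C).
    + rewrite Cmod_mult, Cmod_RtoC_pos by lra.
      assert (0 <= Cmod x) by apply Cmod_ge_0. nra.
    + unfold sums_to. eapply is_series_ext; [|exact Hw].
      intros k. unfold hadamard, Pmap. rewrite Cpow_1_l, Cpow_mult_l. Cring.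
  - destruct HA as [[R0 [HR0 HR0s]] _]. intros z Hz. apply HR0s. lra.
  - intros z Hz u v Hu Hv.
    assert (Hd := is_series_minus _ _ _ _ Hu Hv).
    change (Cmod (u - v)%C < eps).
    assert (Hb := series_Cmod_le _ _ (fun k => (INR k * Cmod (g k) * r ^ k) * d) Hd).
    eapply Rle_lt_trans. apply Hb.
    + intros k. change (Cmod (Pmap s g k * z ^ k - g k * z ^ k)%C <= INR k * Cmod (g k) * r ^ k * d).
      unfold Pmap.
      replace (g k * s ^ k * z ^ k - g k * z ^ k)%C with (g k * z ^ k * (RtoC (s ^ k - 1)))%C
        by (rewrite RtoC_minus, RtoC_pow; ring).
      rewrite Cmod_mult, Cmod_term, Cmod_R.
      assert (Hb1 := bernoulli_le s k ltac:(lra)).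
      assert (0 <= s ^ k <= 1) by (split; [apply pow_le; lra| rewrite <- (pow1 k); apply pow_incr; lra]).
      rewrite Rabs_left1 by lra.
      assert (Hzk : Cmod z ^ k <= r ^ k) by (apply pow_incr; split; [apply Cmod_ge_0|exact Hz]).
      assert (0 <= Cmod (g k)) by apply Cmod_ge_0.
      assert (0 <= Cmod z ^ k) by (apply pow_le; apply Cmod_ge_0).
      assert (0 <= INR k) by apply pos_INR.
      replace (1 - s) with d in Hb1 by (unfold s; ring).
      apply Rle_trans with (Cmod (g k) * r ^ k * (INR k * d)).
      * assert (Cmod (g k) * Cmod z ^ k <= Cmod (g k) * r ^ k) by (apply Rmult_le_compat_l; auto).
        apply Rmult_le_compat; [nra|lra|lra|lra].
      * right; ring.
    + apply ex_series_scal_r. exact HKe.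
    + rewrite Series_scal_r. fold K.
      apply Rle_lt_trans with (K * (eps / (2 * (K + 1)))).
      apply Rmult_le_compat_l; auto.
      apply (Rmult_lt_reg_r (2 * (K + 1))). lra.
      field_simplify; nra.
Qed.


Definition cis (t : R) : C := (cos t, sin t).

Lemma cis_add a b : (cis a * cis b)%C = cis (a + b).
Proof. unfold cis, Cmult; simpl. rewrite cos_plus, sin_plus. f_equal; ring. Qed.

Lemma cis_pow t n : (cis t ^ n)%C = cis (INR n * t).
Proof.
  induction n.
  - simpl. unfold cis. rewrite Rmult_0_l, cos_0, sin_0. reflexivity.
  - simpl Cpow. rewrite IHn, cis_add. f_equal. rewrite S_INR. ring.
Qed.

Lemma Cmod_cis t : Cmod (cis t) = 1.
Proof.
  unfold Cmod, cis; cbn [fst snd].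
  replace (cos t ^ 2 + sin t ^ 2) with 1 by (generalize (sin2_cos2 t); unfold Rsqr; intros; nra).
  apply sqrt_1.
Qed.

Lemma cis_eq_1 x : 0 < x < 2 * PI -> cis x <> RtoC 1.
Proof.
  intros Hx He. unfold cis, RtoC in He. injection He as Hc Hs.
  destruct (Rlt_le_dec x PI) as [H1|H1].
  - assert (0 < sin x) by (apply sin_gt_0; lra). lra.
  - destruct (Rle_lt_or_eq_dec _ _ H1) as [H2|H2].
    + assert (sin x < 0) by (apply sin_lt_0; lra). lra.
    + subst x. rewrite cos_PI in Hc. lra.
Qed.

Fixpoint fsum (f : nat -> C) (n : nat) : C :=
  match n with O => RtoC 0 | S n' => (fsum f n' + f n')%C end.

Lemma fsum_geom (q : C) N : ((1 - q) * fsum (fun j => q ^ j) N)%C = (1 - q ^ N)%C.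
Proof.
  induction N. simpl. Cring.
  simpl fsum. rewrite Cmult_plus_distr_l, IHN. simpl. Cring.
Qed.

Lemma fsum_const1 N : fsum (fun j => RtoC 1 ^ j)%C N = RtoC (INR N).
Proof.
  induction N. simpl. reflexivity.
  simpl fsum. rewrite IHN, Cpow_1_l, S_INR. unfold RtoC, Cplus; simpl. f_equal; ring.
Qed.

Lemma fsum_Cmod_le (f : nat -> C) N M :
  (forall j, Cmod (f j) <= M) -> Cmod (fsum f N) <= INR N * M.
Proof.
  intros H. induction N. simpl. rewrite Cmod_0. lra.
  simpl fsum. rewrite S_INR. eapply Rle_trans. apply Cmod_triangle.
  specialize (H N). lra.
Qed.

Definition omega (N : nat) : C := cis (2 * PI / INR N).

Lemma omega_pow N e : (omega N ^ e)%C = cis (2 * PI * INR e / INR N).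
Proof. unfold omega. rewrite cis_pow. f_equal. unfold Rdiv. ring. Qed.

Lemma omega_N N : (0 < N)%nat -> (omega N ^ N)%C = RtoC 1.
Proof.
  intros HN. rewrite omega_pow.
  replace (2 * PI * INR N / INR N) with (2 * PI).
  unfold cis. rewrite cos_2PI, sin_2PI. reflexivity.
  field. apply not_0_INR. lia.
Qed.

Lemma omega_ne1 N e : (0 < e < N)%nat -> (omega N ^ e)%C <> RtoC 1.
Proof.
  intros He. rewrite omega_pow. apply cis_eq_1.
  assert (0 < INR e) by (apply lt_0_INR; lia).
  assert (INR e < INR N) by (apply lt_INR; lia).
  assert (0 < INR N) by lra.
  generalize PI_RGT_0. intros. split.
  - apply Rdiv_lt_0_compat; nra.
  - apply (Rmult_lt_reg_r (INR N)); auto. unfold Rdiv. rewrite Rmult_assoc, Rinv_l by lra. nra.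
Qed.

Lemma Cmod_omega_pow N e : Cmod (omega N ^ e)%C = 1.
Proof. rewrite omega_pow. apply Cmod_cis. Qed.

Lemma rou_sum_N N : (0 < N)%nat -> fsum (fun j => (omega N ^ N) ^ j)%C N = RtoC (INR N).
Proof. intros HN. rewrite omega_N by auto. apply fsum_const1. Qed.

Lemma rou_sum_0 N d : (0 < N)%nat -> (0 < d < N)%nat ->
  fsum (fun j => (omega N ^ d) ^ j)%C N = RtoC 0.
Proof.
  intros HN Hd. set (q := (omega N ^ d)%C).
  assert (Hq : (q ^ N)%C = RtoC 1).
  { unfold q. rewrite <- Cpow_mult_r, Nat.mul_comm, Cpow_mult_r, omega_N by auto. apply Cpow_1_l. }
  assert (Hq1 : q <> RtoC 1) by (apply omega_ne1; auto).
  assert (H := fsum_geom q N). rewrite Hq in H.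
  replace (1 - 1)%C with (RtoC 0) in H by Cring.
  assert (Hnz : (1 - q)%C <> RtoC 0).
  { intros H'. apply Hq1. replace q with (1 - (1 - q))%C by Cring. rewrite H'. Cring. }
  transitivity (/ (1 - q) * ((1 - q) * fsum (fun j => q ^ j) N))%C.
  - field. exact Hnz.
  - rewrite H. Cring.
Qed.

Lemma omega_shift N d : (0 < N)%nat -> (omega N ^ (N + d))%C = (omega N ^ d)%C.
Proof. intros HN. rewrite Cpow_add_r, omega_N by auto. Cring. Qed.

Lemma direction (b : C) k : b <> RtoC 0 -> (0 < k)%nat ->
  exists z, Cmod z = 1 /\ fst (b * z ^ k)%C < 0.
Proof.
  intros Hb Hk. destruct b as [b1 b2].
  assert (Hk' : INR k <> 0) by (apply not_0_INR; lia).
  destruct (Rtotal_order b1 0) as [H1|[H1|H1]].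
  - exists (cis 0). split. apply Cmod_cis. rewrite cis_pow.
    rewrite Rmult_0_r. unfold cis, Cmult; simpl. rewrite cos_0, sin_0. lra.
  - subst b1. assert (b2 <> 0).
    { intros ->. apply Hb. reflexivity. }
    destruct (Rtotal_order b2 0) as [H2|[H2|H2]]; [|lra|].
    + exists (cis (- (PI / 2) / INR k)). split. apply Cmod_cis. rewrite cis_pow.
      replace (INR k * (- (PI / 2) / INR k)) with (- (PI / 2)) by (field; auto).
      unfold cis, Cmult; simpl. rewrite cos_neg, sin_neg, cos_PI2, sin_PI2. lra.
    + exists (cis ((PI / 2) / INR k)). split. apply Cmod_cis. rewrite cis_pow.
      replace (INR k * ((PI / 2) / INR k)) with (PI / 2) by (field; auto).
      unfold cis, Cmult; simpl. rewrite cos_PI2, sin_PI2. lra.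
  - exists (cis (PI / INR k)). split. apply Cmod_cis. rewrite cis_pow.
    replace (INR k * (PI / INR k)) with PI by (field; auto).
    unfold cis, Cmult; simpl. rewrite cos_PI, sin_PI. lra.
Qed.


Lemma sum_Sn_C (a : nat -> C) n : sum_n a (S n) = Cplus (sum_n a n) (a (S n)).
Proof. exact (@sum_Sn C_AbelianMonoid a n). Qed.

Lemma sum_n_C0 n : sum_n (fun _ : nat => RtoC 0) n = RtoC 0.
Proof.
  induction n. rewrite sum_O. reflexivity.
  rewrite sum_Sn, IHn. change (Cplus (RtoC 0) (RtoC 0) = RtoC 0). Cring.
Qed.

Lemma is_series_C_zero : is_series (fun _ : nat => RtoC 0) (RtoC 0).
Proof.
  unfold is_series. eapply filterlim_ext; [|apply filterlim_const].
  intros n. simpl. symmetry. apply sum_n_C0.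
Qed.

Lemma is_series_single (k : nat) (a : C) :
  is_series (fun m => if Nat.eqb m k then a else RtoC 0) a.
Proof.
  set (s := fun m => if Nat.eqb m k then a else RtoC 0).
  assert (H : forall n, sum_n s n = if Nat.ltb n k then RtoC 0 else a).
  { induction n.
    - rewrite sum_O. unfold s. destruct k; simpl; reflexivity.
    - rewrite sum_Sn_C, IHn. unfold s.
      destruct (Nat.ltb n k) eqn:E1; destruct (Nat.eqb (S n) k) eqn:E2;
        destruct (Nat.ltb (S n) k) eqn:E3;
        rewrite ?Nat.ltb_lt, ?Nat.ltb_ge, ?Nat.eqb_eq, ?Nat.eqb_neq in *;
        try lia; Cring. }
  unfold is_series. apply filterlim_ext_loc with (f := fun _ => a).
  - exists k. intros n Hn. rewrite H. destruct (Nat.ltb n k) eqn:E.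
    rewrite Nat.ltb_lt in E. lia. reflexivity.
  - apply filterlim_const.
Qed.

Lemma is_series_Cmul_l (a : C) (u : nat -> C) l :
  is_series u l -> is_series (fun m => a * u m)%C (a * l)%C.
Proof. intros H. exact (@is_series_scal_l C_AbsRing C_NormedModule a u l H). Qed.

Lemma fsum_ext (f g : nat -> C) N : (forall j, f j = g j) -> fsum f N = fsum g N.
Proof. intros H. induction N. reflexivity. simpl. rewrite IHN, H. reflexivity. Qed.

Lemma fsum_ext_lt (f g : nat -> C) N : (forall j, (j < N)%nat -> f j = g j) -> fsum f N = fsum g N.
Proof. intros H. induction N. reflexivity. simpl. rewrite IHN, H. reflexivity. lia. intros; apply H; lia. Qed.

Lemma fsum_scal (a : C) (f : nat -> C) N : fsum (fun j => a * f j)%C N = (a * fsum f N)%C.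
Proof. induction N. simpl. Cring. simpl. rewrite IHN. Cring. Qed.

Lemma fsum_series (F : nat -> nat -> C) (L : nat -> C) N :
  (forall j, is_series (F j) (L j)) ->
  is_series (fun m => fsum (fun j => F j m) N) (fsum L N).
Proof.
  intros H. induction N.
  - simpl. apply is_series_C_zero.
  - simpl. apply (is_series_plus _ _ _ _ IHN (H N)).
Qed.

Lemma tail_small (b : nat -> R) : ex_series b -> forall e, 0 < e ->
  exists N0, forall n, (N0 <= n)%nat -> Series (fun m => b (n + m)%nat) <= e.
Proof.
  intros Hb e He.
  assert (Hs : is_lim_seq (sum_n b) (Series b)) by exact (Series_correct _ Hb).
  apply is_lim_seq_spec in Hs. destruct (Hs (mkposreal e He)) as [N1 HN1].
  exists (S N1). intros n Hn.
  rewrite (Series_incr_n b n) in HN1 by (lia || exact Hb).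
  assert (H := HN1 (pred n) ltac:(lia)). simpl in H.
  rewrite sum_n_Reals in H.
  revert H. set (T := Series _). intros H.
  apply Rabs_lt_between in H. lra.
Qed.

Lemma cauchy_est (c : coeffs) r eps : 0 < r -> ac c r ->
  (forall z, Cmod z = r -> forall u, sums_to c z u -> Cmod u <= eps) ->
  forall k, Cmod (c k) * r ^ k <= eps.
Proof.
  intros Hr Hac Hb k.
  apply le_epsilon. intros e He.
  destruct (tail_small _ Hac e He) as [N0 HN0].
  set (N := (N0 + k + 1)%nat).
  assert (HN : (0 < N)%nat) by (unfold N; lia).
  assert (HkN : (k < N)%nat) by (unfold N; lia).
  set (w := omega N).
  set (U := fun j => val c (RtoC r * w ^ j)%C).
  assert (Hz : forall j, Cmod (RtoC r * w ^ j)%C = r).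
  { intros j. rewrite Cmod_mult, Cmod_RtoC_pos by lra. unfold w. rewrite Cmod_omega_pow. ring. }
  assert (HU : forall j, sums_to c (RtoC r * w ^ j)%C (U j)).
  { intros j. apply (ac_val c r). exact Hac. rewrite Hz. lra. }
  assert (HUb : forall j, Cmod (U j) <= eps).
  { intros j. apply (Hb _ (Hz j)). apply HU. }
  set (X := fsum (fun j => (w ^ (N - k)) ^ j * U j)%C N).
  set (sig := fun m => fsum (fun j => (w ^ (m + N - k)) ^ j)%C N).
  assert (HX : is_series (fun m => c m * RtoC r ^ m * sig m)%C X).
  { unfold X, sig.
    eapply is_series_ext; [|apply (fsum_series (fun j m => (w ^ (N - k)) ^ j * (c m * (RtoC r * w ^ j) ^ m))%C)].
    - intros m. simpl. rewrite <- fsum_scal. apply fsum_ext. intros j.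
      rewrite Cpow_mult_l.
      replace (m + N - k)%nat with (m + (N - k))%nat by lia.
      rewrite (Cpow_add_r w m (N - k)), Cpow_mult_l.
      rewrite <- !Cpow_mult_r. rewrite (Nat.mul_comm m j). Cring.
    - intros j. apply (is_series_Cmul_l ((w ^ (N - k)) ^ j)%C). apply HU. }
  set (D := (c k * RtoC r ^ k * RtoC (INR N))%C).
  assert (HD := is_series_single k D).
  assert (HXD := is_series_minus _ _ _ _ HX HD).
  set (b := fun m => INR N * (if Nat.leb (k + N) m then Cmod (c m) * r ^ m else 0)).
  assert (Hbe : ex_series b).
  { apply ex_series_Rscal_l. apply (ex_series_Rpos_le _ _ ) with (2 := Hac).
    intros m. destruct (Nat.leb (k + N) m).
    - split. apply Rmult_le_pos. apply Cmod_ge_0. apply pow_le; lra. lra.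
    - split. lra. apply Rmult_le_pos. apply Cmod_ge_0. apply pow_le; lra. }
  assert (Hterm : forall m, Cmod (plus (c m * RtoC r ^ m * sig m)%C (opp (if Nat.eqb m k then D else RtoC 0))) <= b m).
  { intros m. change (Cmod ((c m * RtoC r ^ m * sig m) - (if Nat.eqb m k then D else RtoC 0))%C <= b m).
    unfold b. destruct (Nat.eqb m k) eqn:Emk.
    - apply Nat.eqb_eq in Emk. subst m.
      assert (Hs : sig k = RtoC (INR N)).
      { unfold sig. replace (k + N - k)%nat with N by lia. unfold w. apply rou_sum_N; auto. }
      rewrite Hs. unfold D. replace (c k * RtoC r ^ k * RtoC (INR N) - c k * RtoC r ^ k * RtoC (INR N))%C with (RtoC 0) by Cring.
      rewrite Cmod_0. destruct (Nat.leb (k + N) k) eqn:E. apply Nat.leb_le in E; lia.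
      lra.
    - apply Nat.eqb_neq in Emk.
      replace (c m * RtoC r ^ m * sig m - RtoC 0)%C with (c m * RtoC r ^ m * sig m)%C by Cring.
      destruct (Nat.leb (k + N) m) eqn:E.
      + rewrite !Cmod_mult, Cmod_pow, Cmod_RtoC_pos by lra.
        assert (Hsig : Cmod (sig m) <= INR N * 1).
        { unfold sig. apply fsum_Cmod_le. intros j. rewrite Cmod_pow. unfold w. rewrite Cmod_omega_pow, pow1. lra. }
        assert (0 <= Cmod (c m) * r ^ m) by (apply Rmult_le_pos; [apply Cmod_ge_0|apply pow_le; lra]).
        nra.
      + apply Nat.leb_gt in E.
        assert (Hs : sig m = RtoC 0).
        { unfold sig. destruct (Nat.lt_ge_cases m k) as [Hmk|Hmk].
          - unfold w. apply rou_sum_0; auto. lia.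
          - replace (m + N - k)%nat with (N + (m - k))%nat by lia. unfold w.
            erewrite fsum_ext. apply (rou_sum_0 N (m - k)); auto. lia.
            intros j. simpl. rewrite omega_shift by auto. reflexivity. }
        rewrite Hs. replace (c m * RtoC r ^ m * RtoC 0)%C with (RtoC 0) by Cring. rewrite Cmod_0. lra. }
  assert (HXDb := series_Cmod_le _ _ _ HXD Hterm Hbe).
  assert (HSb : Series b <= INR N * e).
  { unfold b. rewrite Series_scal_l. apply Rmult_le_compat_l. apply pos_INR.
    rewrite (Series_incr_n_aux _ (k + N)).
    - erewrite Series_ext. apply (HN0 (k + N)%nat). unfold N; lia.
      intros m. simpl. destruct (Nat.leb (k + N) (k + N + m)) eqn:E. reflexivity.
      apply Nat.leb_gt in E. lia.
    - intros m Hm. destruct (Nat.leb (k + N) m) eqn:E. apply Nat.leb_le in E. lia. reflexivity. }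
  assert (HXb : Cmod X <= INR N * eps).
  { unfold X. apply fsum_Cmod_le. intros j. rewrite Cmod_mult, Cmod_pow. unfold w.
    rewrite Cmod_omega_pow, pow1, Rmult_1_l. apply HUb. }
  assert (HDm : Cmod D = Cmod (c k) * r ^ k * INR N).
  { unfold D. rewrite !Cmod_mult, Cmod_pow, !Cmod_RtoC_pos. reflexivity. apply pos_INR. lra. }
  assert (HDX : Cmod D <= Cmod X + Cmod (X - D)%C).
  { replace D with (X - (X - D))%C at 1 by Cring. unfold Cminus at 1. eapply Rle_trans. apply Cmod_triangle. rewrite Cmod_opp. lra. }
  assert (HNpos : 0 < INR N) by (apply lt_0_INR; auto).
  change (plus X (opp D)) with (X - D)%C in HXDb.
  apply (Rmult_le_reg_r (INR N)). auto. lra.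
Qed.


Fixpoint tw (v : C) (k j : nat) : C :=
  match k, j with
  | O, O => RtoC 1
  | O, S _ => RtoC 0
  | S k', O => (v * tw v k' O)%C
  | S k', S j' => (v * tw v k' (S j') + tw v k' j')%C
  end.

Definition Tsum (v u : C) (k J : nat) : C := fsum (fun j => tw v k j * u ^ j)%C J.
Definition Dk (v u : C) (k J : nat) : C := ((v + u) ^ k - Tsum v u k J)%C.

Lemma fsum_shift (f : nat -> C) J : fsum f (S J) = (f O + fsum (fun j => f (S j)) J)%C.
Proof. induction J. simpl. Cring. remember (S J) as J'. simpl. rewrite IHJ. subst. simpl. Cring. Qed.

Lemma fsum_plus (f g : nat -> C) J : fsum (fun j => f j + g j)%C J = (fsum f J + fsum g J)%C.
Proof. induction J. simpl. Cring. simpl. rewrite IHJ. Cring. Qed.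

Lemma fsum_zero J : fsum (fun _ => RtoC 0) J = RtoC 0.
Proof. induction J. reflexivity. simpl. rewrite IHJ. Cring. Qed.

Lemma Tsum_rec v u k J : Tsum v u (S k) (S J) = (v * Tsum v u k (S J) + u * Tsum v u k J)%C.
Proof.
  unfold Tsum. rewrite !fsum_shift.
  rewrite (fsum_ext (fun j => tw v (S k) (S j) * u ^ S j)%C
     (fun j => v * (tw v k (S j) * u ^ S j) + u * (tw v k j * u ^ j))%C).
  - rewrite fsum_plus, !fsum_scal. simpl tw. Cring.
  - intros j. simpl. Cring.
Qed.

Lemma Dk_rec v u k J : Dk v u (S k) (S J) = (v * Dk v u k (S J) + u * Dk v u k J)%C.
Proof. unfold Dk. rewrite Tsum_rec. simpl Cpow. Cring. Qed.

Lemma Dk_0S v u J : Dk v u 0 (S J) = RtoC 0.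
Proof.
  unfold Dk, Tsum. rewrite fsum_shift.
  rewrite (fsum_ext _ (fun _ => RtoC 0)) by (intros; simpl; Cring).
  rewrite fsum_zero. simpl. Cring.
Qed.

Lemma Dk_k0 v u k : Dk v u k 0 = ((v + u) ^ k)%C.
Proof. unfold Dk, Tsum. simpl. Cring. Qed.

Lemma Dk_bound v u s k J : 0 < s -> Cmod u <= s ->
  Cmod (Dk v u k J) <= (Cmod u / s) ^ J * (Cmod v + s) ^ k.
Proof.
  intros Hs Hu.
  assert (Hq : 0 <= Cmod u / s) by (apply Rdiv_le_0_compat; [apply Cmod_ge_0|lra]).
  assert (Hv := Cmod_ge_0 v).
  revert J. induction k; intros J.
  - destruct J.
    + rewrite Dk_k0. simpl. rewrite Cmod_1. lra.
    + rewrite Dk_0S, Cmod_0. apply Rmult_le_pos; apply pow_le; lra.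
  - destruct J.
    + rewrite Dk_k0, Cmod_pow, pow_O, Rmult_1_l.
      apply pow_incr. split. apply Cmod_ge_0. eapply Rle_trans. apply Cmod_triangle. lra.
    + rewrite Dk_rec. eapply Rle_trans. apply Cmod_triangle. rewrite !Cmod_mult.
      specialize (IHk (S J)) as H1. specialize (IHk J) as H2.
      assert (E : Cmod u = s * (Cmod u / s)) by (field; lra).
      assert (0 <= Cmod u) by apply Cmod_ge_0.
      apply Rle_trans with (Cmod v * ((Cmod u / s) ^ S J * (Cmod v + s) ^ k) + Cmod u * ((Cmod u / s) ^ J * (Cmod v + s) ^ k)).
      * apply Rplus_le_compat; apply Rmult_le_compat_l; auto.
      * right. rewrite E at 2. simpl. ring.
Qed.

Lemma tw_0 v k : tw v k 0 = (v ^ k)%C.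
Proof. induction k. reflexivity. simpl. rewrite IHk. reflexivity. Qed.

Lemma tw_bound v s k j : 0 < s -> Cmod (tw v k j) * s ^ j <= 2 * (Cmod v + s) ^ k.
Proof.
  intros Hs.
  assert (E : (tw v k j * RtoC s ^ j)%C = (Dk v (RtoC s) k j - Dk v (RtoC s) k (S j))%C).
  { unfold Dk, Tsum. simpl fsum. Cring. }
  assert (Hc : Cmod (RtoC s) = s) by (apply Cmod_RtoC_pos; lra).
  assert (H1 := Dk_bound v (RtoC s) s k j Hs ltac:(lra)).
  assert (H2 := Dk_bound v (RtoC s) s k (S j) Hs ltac:(lra)).
  rewrite Hc in H1, H2. replace (s / s) with 1 in H1, H2 by (field; lra). rewrite pow1 in H1, H2.
  replace (Cmod (tw v k j) * s ^ j) with (Cmod (tw v k j * RtoC s ^ j)%C)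
    by (rewrite Cmod_term, Hc; reflexivity).
  rewrite E. unfold Cminus. eapply Rle_trans. apply Cmod_triangle. rewrite Cmod_opp. lra.
Qed.

Definition tc (c : coeffs) (v : C) (j : nat) : C := csum (fun k => c k * tw v k j)%C.

Definition Acst (c : coeffs) (R0 : R) : R := Series (fun k => Cmod (c k) * R0 ^ k).

Lemma Acst_nonneg c R0 : 0 <= R0 -> ac c R0 -> 0 <= Acst c R0.
Proof.
  intros HR H. unfold Acst. replace 0 with (0 * Series (fun k => Cmod (c k) * R0 ^ k)) by ring.
  rewrite <- Series_scal_l. apply Series_le; [|exact H]. intros n. split. lra.
  rewrite Rmult_0_l. apply Rmult_le_pos. apply Cmod_ge_0. apply pow_le; lra.
Qed.

Lemma tc_sums c R0 v s j : ac c R0 -> 0 < s -> Cmod v + s <= R0 ->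
  is_series (fun k => c k * tw v k j)%C (tc c v j).
Proof.
  intros Hac Hs Hv. apply csum_correct.
  apply (ex_series_C_le _ (fun k => (2 / s ^ j) * (Cmod (c k) * R0 ^ k))).
  - intros k. rewrite Cmod_mult.
    assert (Hb := tw_bound v s k j Hs).
    assert (Hsj : 0 < s ^ j) by (apply pow_lt; lra).
    assert (HA : (Cmod v + s) ^ k <= R0 ^ k) by (apply pow_incr; split; [generalize (Cmod_ge_0 v); lra|lra]).
    assert (Ht : Cmod (tw v k j) <= 2 * (Cmod v + s) ^ k / s ^ j).
    { apply (Rmult_le_reg_r (s ^ j)); auto. unfold Rdiv. rewrite Rmult_assoc, Rinv_l by lra. lra. }
    assert (0 <= Cmod (c k)) by apply Cmod_ge_0.
    apply Rle_trans with (Cmod (c k) * (2 * (Cmod v + s) ^ k / s ^ j)).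
    apply Rmult_le_compat_l; auto.
    unfold Rdiv. 
    assert (0 <= / s ^ j) by (apply Rlt_le, Rinv_0_lt_compat; auto).
    assert (0 <= Cmod (c k) * 2 * / s ^ j) by (apply Rmult_le_pos; lra).
    apply Rle_trans with ((Cmod (c k) * 2 * / s ^ j) * R0 ^ k).
    * replace (Cmod (c k) * (2 * (Cmod v + s) ^ k * / s ^ j)) with ((Cmod (c k) * 2 * / s ^ j) * (Cmod v + s) ^ k) by ring.
      apply Rmult_le_compat_l; auto.
    * right; ring.
  - apply ex_series_Rscal_l. exact Hac.
Qed.

Lemma is_series_Cmul_r (a : C) (u : nat -> C) l :
  is_series u l -> is_series (fun m => u m * a)%C (l * a)%C.
Proof.
  intros H. rewrite Cmult_comm. eapply is_series_ext; [|apply (is_series_Cmul_l a u l H)].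
  intros; simpl; Cring.
Qed.

Lemma taylor c R0 v s u J : ac c R0 -> 0 < s -> Cmod v + s <= R0 -> Cmod u <= s ->
  Cmod (val c (v + u) - fsum (fun j => tc c v j * u ^ j) J)%C <= (Cmod u / s) ^ J * Acst c R0.
Proof.
  intros Hac Hs Hv Hu.
  assert (Hvu : Cmod (v + u)%C <= R0) by (eapply Rle_trans; [apply Cmod_triangle|lra]).
  assert (H1 := ac_val c R0 (v + u)%C Hac Hvu).
  assert (H2 : is_series (fun k => c k * Tsum v u k J)%C (fsum (fun j => tc c v j * u ^ j)%C J)).
  { eapply is_series_ext; [|apply (fsum_series (fun j k => c k * tw v k j * u ^ j)%C)].
    - intros k. simpl. unfold Tsum. rewrite <- fsum_scal. apply fsum_ext. intros j. Cring.
    - intros j. apply is_series_Cmul_r. apply (tc_sums c R0 v s); auto. }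
  assert (H3 := is_series_minus _ _ _ _ H1 H2).
  unfold Acst. rewrite <- Series_scal_l.
  apply (series_Cmod_le _ _ _ H3).
  - intros k. change (Cmod (c k * (v + u) ^ k - c k * Tsum v u k J)%C <= (Cmod u / s) ^ J * (Cmod (c k) * R0 ^ k)).
    replace (c k * (v + u) ^ k - c k * Tsum v u k J)%C with (c k * Dk v u k J)%C by (unfold Dk; Cring).
    rewrite Cmod_mult.
    assert (Hb := Dk_bound v u s k J Hs Hu).
    assert (HA : (Cmod v + s) ^ k <= R0 ^ k) by (apply pow_incr; split; [generalize (Cmod_ge_0 v); lra|lra]).
    assert (Hq : 0 <= (Cmod u / s) ^ J) by (apply pow_le; apply Rdiv_le_0_compat; [apply Cmod_ge_0|lra]).
    assert (0 <= Cmod (c k)) by apply Cmod_ge_0.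
    apply Rle_trans with (Cmod (c k) * ((Cmod u / s) ^ J * (Cmod v + s) ^ k)).
    apply Rmult_le_compat_l; auto.
    replace ((Cmod u / s) ^ J * (Cmod (c k) * R0 ^ k)) with (Cmod (c k) * ((Cmod u / s) ^ J * R0 ^ k)) by ring.
    apply Rmult_le_compat_l; auto. apply Rmult_le_compat_l; auto.
  - apply ex_series_Rscal_l. exact Hac.
Qed.

Lemma tc_0 c R0 v s : ac c R0 -> 0 < s -> Cmod v + s <= R0 -> tc c v 0 = val c v.
Proof.
  intros Hac Hs Hv. apply (is_series_C_uniq (fun k => c k * tw v k 0)%C).
  - apply (tc_sums c R0 v s); auto.
  - eapply is_series_ext; [|apply (ac_val c R0 v Hac ltac:(lra))].
    intros k. simpl. rewrite tw_0. reflexivity.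
Qed.

Lemma lipschitz c R0 v s u : ac c R0 -> 0 < s -> Cmod v + s <= R0 -> Cmod u <= s ->
  Cmod (val c (v + u) - val c v)%C <= Cmod u / s * Acst c R0.
Proof.
  intros Hac Hs Hv Hu. assert (H := taylor c R0 v s u 1 Hac Hs Hv Hu).
  simpl fsum in H. rewrite (tc_0 c R0 v s) in H by auto.
  replace (RtoC 0 + val c v * 1)%C with (val c v) in H by Cring.
  rewrite pow_1 in H. exact H.
Qed.


Lemma Cmod_fst_le (c : C) : Rabs (fst c) <= Cmod c.
Proof. apply re_le_Cmod. Qed.

Lemma Cmod_snd_le (c : C) : Rabs (snd c) <= Cmod c.
Proof.
  unfold Cmod. rewrite <- sqrt_Rsqr_abs. apply sqrt_le_1_alt. unfold Rsqr.
  generalize (pow2_ge_0 (fst c)). intros. simpl. nra.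
Qed.

Lemma Cmod_le_sum (c : C) : Cmod c <= Rabs (fst c) + Rabs (snd c).
Proof.
  unfold Cmod. rewrite <- (sqrt_Rsqr (Rabs (fst c) + Rabs (snd c))).
  apply sqrt_le_1_alt. unfold Rsqr.
  generalize (Rabs_pos (fst c)) (Rabs_pos (snd c)). intros.
  rewrite <- (pow2_abs (fst c)), <- (pow2_abs (snd c)). nra.
  generalize (Rabs_pos (fst c)) (Rabs_pos (snd c)). lra.
Qed.

Lemma min_attainC (K : C -> Prop) (f : C -> R) (M : R) :
  (exists p, K p) ->
  (forall p, K p -> Cmod p <= M) ->
  (forall p, (forall e, 0 < e -> exists q, K q /\ Cmod (q - p)%C < e) -> K p) ->
  (forall p, K p -> forall e, 0 < e -> exists d, 0 < d /\
      forall q, K q -> Cmod (q - p)%C < d -> Rabs (f q - f p) < e) ->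
  exists c, K c /\ forall t, K t -> f c <= f t.
Proof.
  intros Hne Hb Hc Hf.
  apply (MC.min_attain K f M Hne).
  - intros p Hp. split.
    + eapply Rle_trans. apply Cmod_fst_le. auto.
    + eapply Rle_trans. apply Cmod_snd_le. auto.
  - intros p H. apply Hc. intros e He.
    destruct (H (e / 2) ltac:(lra)) as [q [Kq [H1 H2]]].
    exists q. split; auto. eapply Rle_lt_trans. apply Cmod_le_sum. simpl. unfold Rminus in *. lra.
  - intros p Kp e He. destruct (Hf p Kp e He) as [d [Hd Hq]].
    exists (d / 2). split. lra. intros q Kq H1 H2. apply Hq; auto.
    eapply Rle_lt_trans. apply Cmod_le_sum. simpl. unfold Rminus in *. lra.
Qed.

Lemma exists_least (P : nat -> Prop) : (exists n, P n) -> exists n, P n /\ forall j, (j < n)%nat -> ~ P j.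
Proof.
  intros [n Hn]. revert Hn. induction n using (well_founded_induction Nat.lt_wf_0). intros Hn.
  destruct (classic (exists j, (j < n)%nat /\ P j)) as [[j [Hj1 Hj2]]|Hno].
  - apply (H j Hj1 Hj2).
  - exists n. split; auto. intros j Hj Pj. apply Hno. exists j. auto.
Qed.

Lemma geom_to_zero (q A x : R) : 0 <= q < 1 -> (forall J, x <= q ^ J * A) -> x <= 0.
Proof.
  intros Hq H. destruct (Rle_or_lt x 0) as [Hx|Hx]; auto. exfalso.
  destruct (Rle_or_lt A 0) as [HA|HA].
  - specialize (H O). simpl in H. lra.
  - destruct (pow_lt_1_zero q ltac:(rewrite Rabs_pos_eq; lra) (x / A) ltac:(apply Rdiv_lt_0_compat; lra)) as [N HN].
    specialize (HN N (le_n N)). specialize (H N).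
    rewrite Rabs_pos_eq in HN by (apply pow_le; lra).
    apply (Rmult_lt_compat_r A) in HN; auto. unfold Rdiv in HN. rewrite Rmult_assoc, Rinv_l, Rmult_1_r in HN by lra. lra.
Qed.

Lemma val_0 (c : coeffs) : val c (RtoC 0) = c O.
Proof.
  apply (is_series_C_uniq (fun k => c k * RtoC 0 ^ k)%C).
  - apply csum_correct. exists (c O). eapply is_series_ext; [|apply (is_series_single O (c O))].
    intros k. destruct k; simpl; Cring.
  - eapply is_series_ext; [|apply (is_series_single O (c O))].
    intros k. destruct k; simpl; Cring.
Qed.

Lemma fsum_upto (f : nat -> C) m : (forall j, (j < m)%nat -> f j = RtoC 0) -> fsum f (S m) = f m.
Proof.
  intros H. simpl. rewrite (fsum_ext_lt f (fun _ => RtoC 0)).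
  rewrite fsum_zero. Cring. intros j Hj. apply H; auto.
Qed.


Lemma Cmod_sub_sym (a b : C) : Cmod (a - b)%C = Cmod (b - a)%C.
Proof. replace (a - b)%C with (- (b - a))%C by Cring. apply Cmod_opp. Qed.

Lemma Cmod_rev_tri (a b : C) : Cmod a - Cmod b <= Cmod (a - b)%C.
Proof.
  replace a with ((a - b) + b)%C at 1 by Cring.
  generalize (Cmod_triangle (a - b)%C b). lra.
Qed.

Lemma cont_val c R0 rho p : 0 < rho < R0 -> ac c R0 -> Cmod p <= rho ->
  forall e, 0 < e -> exists d, 0 < d /\ forall q, Cmod (q - p)%C < d -> Cmod (val c q - val c p)%C < e.
Proof.
  intros Hr Hac Hp e He.
  set (s' := R0 - rho). set (A := Acst c R0).
  assert (HA : 0 <= A) by (apply Acst_nonneg; [lra|auto]).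
  exists (Rmin s' (e * s' / (A + 1))). split.
  - apply Rmin_glb_lt. unfold s'; lra. apply Rdiv_lt_0_compat. unfold s'; nra. lra.
  - intros q Hq.
    assert (H1 : Cmod (q - p)%C < s') by (eapply Rlt_le_trans; [exact Hq| apply Rmin_l]).
    assert (H2 : Cmod (q - p)%C < e * s' / (A + 1)) by (eapply Rlt_le_trans; [exact Hq| apply Rmin_r]).
    assert (L := lipschitz c R0 p s' (q - p)%C Hac ltac:(unfold s'; lra) ltac:(unfold s'; lra) ltac:(lra)).
    replace (p + (q - p))%C with q in L by Cring.
    eapply Rle_lt_trans. exact L.
    assert (Hs' : 0 < s') by (unfold s'; lra).
    apply Rle_lt_trans with (e / (A + 1) * A).
    + apply Rmult_le_compat_r; auto. apply (Rmult_le_reg_r s'); auto.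
      unfold Rdiv. rewrite Rmult_assoc, Rinv_l, Rmult_1_r by lra.
      apply Rlt_le. replace (e * / (A + 1) * s') with (e * s' / (A + 1)) by (field; lra). exact H2.
    + apply (Rmult_lt_reg_r (A + 1)). lra. unfold Rdiv. 
      replace (e * / (A + 1) * A * (A + 1)) with (e * A) by (field; lra). nra.
Qed.

Lemma closed_zero c R0 rho p : 0 < rho < R0 -> ac c R0 -> Cmod p <= rho ->
  (forall e, 0 < e -> exists q, val c q = RtoC 0 /\ Cmod (q - p)%C < e) -> val c p = RtoC 0.
Proof.
  intros Hr Hac Hp H. apply Cmod_eq_0. apply Rle_antisym; [|apply Cmod_ge_0].
  apply le_epsilon. intros e He. rewrite Rplus_0_l.
  destruct (cont_val c R0 rho p Hr Hac Hp e He) as [d [Hd Hq]].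
  destruct (H d Hd) as [q [Hq0 Hqd]]. specialize (Hq q Hqd).
  rewrite Hq0 in Hq. replace (RtoC 0 - val c p)%C with (- val c p)%C in Hq by Cring.
  rewrite Cmod_opp in Hq. lra.
Qed.

Lemma min_zero c R0 rho z0 : 0 < rho < R0 -> ac c R0 -> Cmod z0 < rho -> val c z0 = RtoC 0 ->
  exists zs, Cmod zs <= Cmod z0 /\ val c zs = RtoC 0 /\
    forall t, Cmod t <= Cmod z0 -> val c t = RtoC 0 -> Cmod zs <= Cmod t.
Proof.
  intros Hr Hac Hz0 Hv0.
  destruct (min_attainC (fun z => Cmod z <= Cmod z0 /\ val c z = RtoC 0) Cmod (Cmod z0)) as [zs [[H1 H2] H3]].
  - exists z0. split; auto. lra.
  - intros p [Hp _]. auto.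
  - intros p H. 
    assert (Hp : Cmod p <= Cmod z0).
    { apply le_epsilon. intros e He. destruct (H e He) as [q [[Hq1 _] Hq2]].
      generalize (Cmod_rev_tri p q). rewrite Cmod_sub_sym. lra. }
    split; auto. apply (closed_zero c R0 rho p Hr Hac ltac:(lra)).
    intros e He. destruct (H e He) as [q [[_ Hq] Hq2]]. exists q. split; auto.
  - intros p _ e He. exists e. split; auto. intros q _ Hq.
    apply Rabs_def1.
    + generalize (Cmod_rev_tri q p). lra.
    + generalize (Cmod_rev_tri p q). rewrite Cmod_sub_sym. lra.
  - exists zs. split; [auto|split; [auto|]]. intros t Ht1 Ht2. apply H3. auto.
Qed.


Lemma Cminus_eq_0 (a b : C) : (a - b)%C = RtoC 0 -> a = b.
Proof. intros H. replace a with ((a - b) + b)%C by Cring. rewrite H. Cring. Qed.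

Lemma all_zero_const c R0 v s' : ac c R0 -> 0 < s' -> Cmod v + s' <= R0 ->
  (forall j, (1 <= j)%nat -> tc c v j = RtoC 0) ->
  forall u, Cmod u <= s' / 2 -> val c (v + u)%C = val c v.
Proof.
  intros Hac Hs Hv H u Hu.
  apply Cminus_eq_0. apply Cmod_eq_0. apply Rle_antisym; [|apply Cmod_ge_0].
  apply (geom_to_zero (Cmod u / s') (Acst c R0)).
  - split. apply Rdiv_le_0_compat. apply Cmod_ge_0. lra.
    apply (Rmult_lt_reg_r s'); auto. unfold Rdiv. rewrite Rmult_assoc, Rinv_l by lra. lra.
  - intros J. destruct J.
    + simpl. rewrite Rmult_1_l.
      assert (L := lipschitz c R0 v s' u Hac Hs Hv ltac:(lra)).
      assert (0 <= Acst c R0) by (apply Acst_nonneg; [generalize (Cmod_ge_0 v); lra|auto]).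
      assert (Cmod u / s' <= 1). { apply (Rmult_le_reg_r s'); auto. unfold Rdiv. rewrite Rmult_assoc, Rinv_l by lra. lra. }
      nra.
    + assert (T := taylor c R0 v s' u (S J) Hac Hs Hv ltac:(lra)).
      rewrite fsum_shift in T.
      rewrite (fsum_ext _ (fun _ => RtoC 0)) in T by (intros j; rewrite H by lia; Cring).
      rewrite fsum_zero, (tc_0 c R0 v s') in T by auto.
      replace (val c v * u ^ 0 + 0)%C with (val c v) in T by (simpl; Cring). exact T.
Qed.

Lemma local_exp c R0 rho zs : 0 < rho < R0 -> ac c R0 -> Cmod zs < rho -> val c zs = RtoC 0 ->
  zs <> RtoC 0 ->
  (forall t, Cmod t <= Cmod zs -> val c t = RtoC 0 -> Cmod zs <= Cmod t) ->
  exists m E, (1 <= m)%nat /\ E <> RtoC 0 /\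
    forall u, Cmod u <= R0 - rho ->
      Cmod (val c (zs + u) - E * u ^ m)%C <= (Cmod u / (R0 - rho)) ^ (S m) * Acst c R0.
Proof.
  intros Hr Hac Hzs Hv Hnz Hmin.
  set (s' := R0 - rho).
  assert (Hs' : 0 < s') by (unfold s'; lra).
  assert (Hzs' : Cmod zs + s' <= R0) by (unfold s'; lra).
  assert (Hex : exists j, tc c zs j <> RtoC 0).
  { apply NNPP. intros Hno.
    assert (Hall : forall j, tc c zs j = RtoC 0).
    { intros j. apply NNPP. intros Hj. apply Hno. exists j. auto. }
    assert (Hpos : 0 < Cmod zs) by (apply Cmod_gt_0; auto).
    set (t := Rmin (1/2) (s' / (2 * Cmod zs))).
    assert (Ht0 : 0 < t) by (apply Rmin_glb_lt; [lra|apply Rdiv_lt_0_compat; lra]).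
    assert (Ht1 : t <= 1/2) by apply Rmin_l.
    assert (Ht2 : t <= s' / (2 * Cmod zs)) by apply Rmin_r.
    set (u := (RtoC (- t) * zs)%C).
    assert (Hu : Cmod u = t * Cmod zs).
    { unfold u. rewrite Cmod_mult, Cmod_R, Rabs_Ropp, Rabs_pos_eq by lra. reflexivity. }
    assert (Hu2 : Cmod u <= s' / 2).
    { rewrite Hu. apply (Rmult_le_reg_r (/ Cmod zs)). apply Rinv_0_lt_compat; lra.
      rewrite Rmult_assoc, Rinv_r by lra. replace (s' / 2 * / Cmod zs) with (s' / (2 * Cmod zs)) by (field; lra). lra. }
    assert (Hc := all_zero_const c R0 zs s' Hac Hs' Hzs' (fun j _ => Hall j) u Hu2).
    assert (E : (zs + u)%C = (RtoC (1 - t) * zs)%C) by (unfold u; rewrite RtoC_minus, RtoC_opp; ring).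
    assert (Hm : Cmod (zs + u)%C = (1 - t) * Cmod zs).
    { rewrite E, Cmod_mult, Cmod_R, Rabs_pos_eq by lra. reflexivity. }
    assert (H := Hmin (zs + u)%C ltac:(rewrite Hm; nra) ltac:(rewrite Hc; auto)).
    rewrite Hm in H. nra. }
  destruct (exists_least _ Hex) as [m [Hm Hlt]].
  assert (Hm1 : (1 <= m)%nat).
  { destruct m. rewrite (tc_0 c R0 zs s') in Hm by auto. contradiction. lia. }
  exists m, (tc c zs m). split; auto. split; auto.
  intros u Hu.
  assert (T := taylor c R0 zs s' u (S m) Hac Hs' Hzs' Hu).
  rewrite fsum_upto in T. exact T.
  intros j Hj. assert (tc c zs j = RtoC 0) by (apply NNPP; apply Hlt; auto).
  rewrite H. Cring.
Qed.

Lemma circle_bound c R0 rho zs m E : 0 < rho < R0 -> ac c R0 -> Cmod zs < rho -> E <> RtoC 0 ->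
  (forall u, Cmod u <= R0 - rho ->
      Cmod (val c (zs + u) - E * u ^ m)%C <= (Cmod u / (R0 - rho)) ^ (S m) * Acst c R0) ->
  exists s beta, 0 < s /\ s <= rho - Cmod zs /\ 0 < beta /\
    forall u, Cmod u = s -> beta <= Cmod (val c (zs + u)).
Proof.
  intros Hr Hac Hzs HE Hloc.
  set (s' := R0 - rho). set (A := Acst c R0).
  assert (Hs' : 0 < s') by (unfold s'; lra).
  assert (HA : 0 <= A) by (apply Acst_nonneg; [lra|auto]).
  assert (HEp : 0 < Cmod E) by (apply Cmod_gt_0; auto).
  assert (Hsm : 0 < s' ^ S m) by (apply pow_lt; auto).
  set (s := Rmin (Rmin s' (rho - Cmod zs)) (Cmod E * s' ^ S m / (2 * (A + 1)))).
  assert (Hs1 : s <= s') by (unfold s; eapply Rle_trans; [apply Rmin_l|apply Rmin_l]).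
  assert (Hs2 : s <= rho - Cmod zs) by (unfold s; eapply Rle_trans; [apply Rmin_l|apply Rmin_r]).
  assert (Hs3 : s <= Cmod E * s' ^ S m / (2 * (A + 1))) by (unfold s; apply Rmin_r).
  assert (Hs0 : 0 < s).
  { unfold s. apply Rmin_glb_lt. apply Rmin_glb_lt; lra. apply Rdiv_lt_0_compat; nra. }
  exists s, (Cmod E * s ^ m / 2). split; auto. split; auto. split.
  { apply Rdiv_lt_0_compat; [|lra]. apply Rmult_lt_0_compat; auto. apply pow_lt; auto. }
  intros u Hu.
  assert (L := Hloc u ltac:(fold s'; lra)). fold s' A in L.
  assert (Hrt := Cmod_rev_tri (E * u ^ m)%C (val c (zs + u))).
  rewrite Cmod_sub_sym in Hrt. rewrite Cmod_mult, Cmod_pow, Hu in Hrt.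
  rewrite Hu in L.
  assert (Hq : (s / s') ^ S m * A <= Cmod E * s ^ m / 2).
  { rewrite Rpow_div_l by lra. simpl pow.
    assert (0 <= s ^ m) by (apply pow_le; lra).
    apply Rle_trans with (s ^ m * (s * A / s' ^ S m)).
    - right. simpl. field. split; [apply pow_nonzero|]; lra.
    - replace (Cmod E * s ^ m / 2) with (s ^ m * (Cmod E / 2)) by field.
      apply Rmult_le_compat_l; auto.
      apply (Rmult_le_reg_r (s' ^ S m)); auto.
      replace (s * A / s' ^ S m * s' ^ S m) with (s * A) by (field; lra).
      apply Rle_trans with (Cmod E * s' ^ S m / (2 * (A + 1)) * A).
      apply Rmult_le_compat_r; auto.
      replace (Cmod E * s' ^ S m / (2 * (A + 1)) * A) with (Cmod E / 2 * s' ^ S m * (A / (A + 1))) by (field; lra).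
      assert (A / (A + 1) <= 1). { apply (Rmult_le_reg_r (A + 1)). lra. unfold Rdiv. rewrite Rmult_assoc, Rinv_l by lra. lra. }
      assert (0 <= Cmod E / 2 * s' ^ S m) by nra. nra. }
  lra.
Qed.


Lemma Rabs_Cmod_diff (a b : C) : Rabs (Cmod a - Cmod b) <= Cmod (a - b)%C.
Proof.
  apply Rabs_le. split.
  - generalize (Cmod_rev_tri b a). rewrite (Cmod_sub_sym b a). lra.
  - apply Cmod_rev_tri.
Qed.

Lemma Cmod_1px (x : C) : fst x < 0 -> fst x ^ 2 + snd x ^ 2 <= - fst x / 2 ->
  Cmod (1 + x)%C <= 1 + fst x / 2.
Proof.
  intros H1 H2. unfold Cmod. simpl fst; simpl snd.
  assert (Hx : - 1 / 2 <= fst x) by nra.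
  rewrite <- (sqrt_Rsqr (1 + fst x / 2)) by lra. apply sqrt_le_1_alt.
  unfold Rsqr. simpl in *. nra.
Qed.

Lemma fsum_two (f : nat -> C) k : (1 <= k)%nat -> (forall j, (1 <= j < k)%nat -> f j = RtoC 0) ->
  fsum f (S k) = (f O + f k)%C.
Proof.
  intros Hk H.
  assert (Aux : forall n, (1 <= n <= k)%nat -> fsum f n = f O).
  { induction n; intros Hn. lia. simpl fsum. destruct (Nat.eq_dec n 0) as [->|Hn0].
    simpl. Cring. rewrite IHn by lia. rewrite (H n) by lia. Cring. }
  simpl. rewrite Aux by lia. reflexivity.
Qed.

Lemma Cmod_scale_unit (t : R) (z : C) : 0 <= t -> Cmod z = 1 -> Cmod (RtoC t * z)%C = t.
Proof. intros Ht Hz. rewrite Cmod_mult, Hz, Cmod_RtoC_pos by auto. ring. Qed.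

Lemma min_mod e R0 rho zs s : 0 < rho < R0 -> ac e R0 -> 0 < s -> Cmod zs + s <= rho ->
  (forall z, Cmod (z - zs)%C <= s -> val e z <> RtoC 0) ->
  exists z, Cmod (z - zs)%C = s /\ Cmod (val e z) <= Cmod (val e zs).
Proof.
  intros Hr Hac Hs Hzs Hnz.
  set (s' := R0 - rho). assert (Hs' : 0 < s') by (unfold s'; lra).
  set (A := Acst e R0). assert (HA : 0 <= A) by (apply Acst_nonneg; [lra|auto]).
  set (B := fun z => Cmod (z - zs)%C <= s).
  assert (HBr : forall z, B z -> Cmod z <= rho).
  { intros z Hz. unfold B in Hz. replace z with ((z - zs) + zs)%C by Cring.
    eapply Rle_trans. apply Cmod_triangle. lra. }
  assert (HBc : forall p, (forall e0, 0 < e0 -> exists q, B q /\ Cmod (q - p)%C < e0) -> B p).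
  { intros p H. unfold B. apply le_epsilon. intros e0 He0. destruct (H e0 He0) as [q [Hq1 Hq2]].
    unfold B in Hq1. replace (p - zs)%C with ((q - zs) - (q - p))%C by Cring.
    unfold Cminus at 1. eapply Rle_trans. apply Cmod_triangle. rewrite Cmod_opp. lra. }
  assert (HGc : forall p, B p -> forall e0, 0 < e0 -> exists d, 0 < d /\ forall q, B q -> Cmod (q - p)%C < d ->
             Rabs (Cmod (val e q) - Cmod (val e p)) < e0).
  { intros p Hp e0 He0. destruct (cont_val e R0 rho p Hr Hac (HBr p Hp) e0 He0) as [d [Hd Hq]].
    exists d. split; auto. intros q _ Hqd. eapply Rle_lt_trans. apply Rabs_Cmod_diff. apply Hq; auto. }
  assert (HzsB : B zs) by (unfold B; replace (zs - zs)%C with (RtoC 0) by Cring; rewrite Cmod_0; lra).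
  destruct (min_attainC B (fun z => Cmod (val e z)) rho) as [v0 [Hv0B Hv0min]].
  { exists zs. auto. } { auto. } { auto. } { auto. }
  set (mu := Cmod (val e v0)).
  set (Sset := fun z => B z /\ Cmod (val e z) <= mu).
  destruct (min_attainC Sset (fun z => - Cmod (z - zs)%C) rho) as [v [[HvB HvS] Hvmax]].
  { exists v0. split; auto. unfold mu; lra. }
  { intros p [Hp _]. auto. }
  { intros p H. assert (Hp : B p).
    { apply HBc. intros e0 He0. destruct (H e0 He0) as [q [[Hq _] Hq2]]. exists q. auto. }
    split; auto. apply le_epsilon. intros e0 He0.
    destruct (cont_val e R0 rho p Hr Hac (HBr p Hp) e0 He0) as [d [Hd Hq]].
    destruct (H d Hd) as [q [[_ Hq1] Hq2]]. specialize (Hq q Hq2).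
    generalize (Rabs_Cmod_diff (val e q) (val e p)). intros Hx. apply Rabs_le_between' in Hx.
    lra. }
  { intros p _ e0 He0. exists e0. split; auto. intros q _ Hq.
    replace (- Cmod (q - zs)%C - - Cmod (p - zs)%C) with (- (Cmod (q - zs)%C - Cmod (p - zs)%C)) by ring.
    rewrite Rabs_Ropp. eapply Rle_lt_trans. apply Rabs_Cmod_diff.
    replace (q - zs - (p - zs))%C with (q - p)%C by Cring. auto. }
  assert (Hmu : Cmod (val e v) = mu) by (apply Rle_antisym; auto; apply Hv0min; auto).
  assert (HvB' := HvB). unfold B in HvB'.
  destruct (Rle_lt_or_eq_dec _ _ HvB') as [Hlt|Heq].
  2: { exists v. split; auto. rewrite Hmu. apply Hv0min. auto. }
  exfalso.
  set (w := (v - zs)%C).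
  assert (Hvr : Cmod v <= rho) by auto.
  assert (Hv' : Cmod v + s' <= R0) by (unfold s'; lra).
  assert (HGv : val e v <> RtoC 0) by (apply Hnz; auto).
  assert (Hmupos : 0 < mu) by (rewrite <- Hmu; apply Cmod_gt_0; auto).
  destruct (classic (exists j, (1 <= j)%nat /\ tc e v j <> RtoC 0)) as [Hex|Hno].
  - destruct (exists_least _ Hex) as [k [[Hk1 HFk] Hkmin]].
    assert (Hzero : forall j, (1 <= j < k)%nat -> tc e v j = RtoC 0).
    { intros j Hj. apply NNPP. intros Hj'. apply (Hkmin j). lia. split; auto. lia. }
    set (Gv := val e v). set (F := tc e v k). set (b := (F / Gv)%C).
    assert (Hb : b <> RtoC 0).
    { unfold b. intros H. apply HFk. fold F. replace F with (F / Gv * Gv)%C by (field; auto). rewrite H. Cring. }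
    destruct (direction b k Hb ltac:(lia)) as [zeta [Hzeta Hdir]].
    set (lam := - fst (b * zeta ^ k)%C). assert (Hlam : 0 < lam) by (unfold lam; lra).
    set (Bm := Cmod b). assert (HBm : 0 <= Bm) by apply Cmod_ge_0.
    set (t := Rmin (Rmin (Rmin (s - Cmod w) s') (Rmin 1 (lam / (2 * Bm ^ 2 + 1))))
                   (mu * lam * s' ^ S k / (4 * (A + 1)))).
    assert (Hsk : 0 < s' ^ S k) by (apply pow_lt; auto).
    assert (Ht0 : 0 < t).
    { unfold t. repeat apply Rmin_glb_lt; try (unfold w; lra); try lra.
      apply Rdiv_lt_0_compat. lra. nra.
      apply Rdiv_lt_0_compat. apply Rmult_lt_0_compat; auto. apply Rmult_lt_0_compat; auto. lra. }
    assert (Ht1 : t <= s - Cmod w) by (unfold t; repeat (eapply Rle_trans; [apply Rmin_l|]); lra).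
    assert (Ht2 : t <= s') by (unfold t; eapply Rle_trans; [apply Rmin_l|]; eapply Rle_trans; [apply Rmin_l|]; apply Rmin_r).
    assert (Ht3 : t <= 1) by (unfold t; eapply Rle_trans; [apply Rmin_l|]; eapply Rle_trans; [apply Rmin_r|]; apply Rmin_l).
    assert (Ht4 : t <= lam / (2 * Bm ^ 2 + 1)) by (unfold t; eapply Rle_trans; [apply Rmin_l|]; eapply Rle_trans; [apply Rmin_r|]; apply Rmin_r).
    assert (Ht5 : t <= mu * lam * s' ^ S k / (4 * (A + 1))) by (unfold t; apply Rmin_r).
    set (u := (RtoC t * zeta)%C).
    assert (Hu : Cmod u = t) by (apply Cmod_scale_unit; lra).
    assert (T := taylor e R0 v s' u (S k) Hac Hs' Hv' ltac:(lra)).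
    rewrite fsum_two in T; [|lia|intros j Hj; rewrite Hzero by auto; Cring].
    rewrite (tc_0 e R0 v s') in T by auto. fold Gv F in T.
    set (x := (RtoC (t ^ k) * (b * zeta ^ k))%C).
    assert (Ex : (Gv * u ^ 0 + F * u ^ k)%C = (Gv * (1 + x))%C).
    { unfold x, b. change (u ^ 0)%C with (RtoC 1). unfold u. rewrite (Cpow_mult_l (RtoC t) zeta k), <- RtoC_pow.
      match goal with |- ?a = ?b => change (@eq C a b) end. field. exact HGv. }
    rewrite Ex in T.
    assert (Htk : 0 < t ^ k) by (apply pow_lt; auto).
    assert (Htk1 : t ^ k <= t).
    { destruct k. lia. change (t ^ S k) with (t * t ^ k).
      assert (t ^ k <= 1) by (rewrite <- (pow1 k); apply pow_incr; lra).
      assert (0 <= t ^ k) by (apply pow_le; lra). nra. }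
    assert (Hfx : fst x = - lam * t ^ k).
    { unfold x, lam. unfold RtoC, Cmult. simpl. ring. }
    assert (Hmx : fst x ^ 2 + snd x ^ 2 = (t ^ k * Bm) ^ 2).
    { rewrite <- Cmod2_alt. unfold x, Bm. rewrite !Cmod_mult, Cmod_pow, Hzeta, pow1, Cmod_RtoC_pos by lra. unfold Re, Im. ring. }
    assert (Hsmall : fst x ^ 2 + snd x ^ 2 <= - fst x / 2).
    { rewrite Hmx, Hfx.
      assert (t * (2 * Bm ^ 2 + 1) <= lam).
      { apply (Rmult_le_reg_r (/ (2 * Bm ^ 2 + 1))). apply Rinv_0_lt_compat. nra.
        rewrite Rmult_assoc, Rinv_r, Rmult_1_r by nra. exact Ht4. }
      assert (t ^ k * Bm ^ 2 * 2 <= lam) by nra.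
      nra. }
    assert (H1x := Cmod_1px x ltac:(rewrite Hfx; nra) Hsmall).
    assert (HGx : Cmod (Gv * (1 + x))%C <= mu * (1 - lam * t ^ k / 2)).
    { rewrite Cmod_mult. fold Gv in Hmu. rewrite Hmu. rewrite Hfx in H1x.
      apply Rmult_le_compat_l; lra. }
    assert (Hrem : (Cmod u / s') ^ S k * A < mu * lam * t ^ k / 2).
    { rewrite Hu, Rpow_div_l by lra.
      replace (t ^ S k / s' ^ S k * A) with (t ^ k * (t * A / s' ^ S k)) by (simpl; field; repeat split; try apply pow_nonzero; lra).
      replace (mu * lam * t ^ k / 2) with (t ^ k * (mu * lam / 2)) by field.
      apply Rmult_lt_compat_l; auto.
      apply (Rmult_lt_reg_r (s' ^ S k)); auto.
      replace (t * A / s' ^ S k * s' ^ S k) with (t * A) by (field; lra).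
      apply Rle_lt_trans with (mu * lam * s' ^ S k / (4 * (A + 1)) * A).
      apply Rmult_le_compat_r; auto.
      replace (mu * lam * s' ^ S k / (4 * (A + 1)) * A) with ((mu * lam * s' ^ S k) * (A / (4 * (A + 1)))) by (field; lra).
      replace (mu * lam / 2 * s' ^ S k) with ((mu * lam * s' ^ S k) * (1 / 2)) by field.
      apply Rmult_lt_compat_l. apply Rmult_lt_0_compat; auto. apply Rmult_lt_0_compat; auto.
      apply (Rmult_lt_reg_r (4 * (A + 1))). lra. unfold Rdiv. rewrite Rmult_assoc, Rinv_l by lra. lra. }
    assert (HGvu : Cmod (val e (v + u)) < mu).
    { replace (val e (v + u)) with ((val e (v + u) - Gv * (1 + x)) + Gv * (1 + x))%C by Cring.
      eapply Rle_lt_trans. apply Cmod_triangle.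
      assert (0 < mu * lam * t ^ k) by (apply Rmult_lt_0_compat; auto; apply Rmult_lt_0_compat; auto).
      fold A in T. lra. }
    assert (HvuB : B (v + u)%C).
    { unfold B. replace (v + u - zs)%C with (w + u)%C by (unfold w; Cring).
      eapply Rle_trans. apply Cmod_triangle. lra. }
    specialize (Hv0min _ HvuB). fold mu in Hv0min. lra.
  - assert (Hall : forall j, (1 <= j)%nat -> tc e v j = RtoC 0).
    { intros j Hj. apply NNPP. intros H. apply Hno. exists j. auto. }
    assert (Hconst := all_zero_const e R0 v s' Hac Hs' Hv' Hall).
    set (t := Rmin (s - Cmod w) (s' / 2)).
    assert (Ht0 : 0 < t) by (unfold t; apply Rmin_glb_lt; unfold w; lra).
    assert (Ht1 : t <= s - Cmod w) by apply Rmin_l.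
    assert (Ht2 : t <= s' / 2) by apply Rmin_r.
    assert (Hdir : exists zeta, Cmod zeta = 1 /\ Cmod (w + RtoC t * zeta)%C = Cmod w + t).
    { destruct (Ceq_dec w (RtoC 0)) as [Hw|Hw].
      - exists (RtoC 1). split. apply Cmod_1. rewrite Hw.
        replace (RtoC 0 + RtoC t * RtoC 1)%C with (RtoC t) by Cring.
        rewrite Cmod_0, Cmod_RtoC_pos; lra.
      - assert (Hwp : 0 < Cmod w) by (apply Cmod_gt_0; auto).
        exists (w * RtoC (/ Cmod w))%C. split.
        + rewrite Cmod_mult, Cmod_RtoC_pos. field. lra. apply Rlt_le, Rinv_0_lt_compat; auto.
        + replace (w + RtoC t * (w * RtoC (/ Cmod w)))%C with (w * RtoC (1 + t / Cmod w))%C.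
          * rewrite Cmod_mult, Cmod_RtoC_pos. field. lra.
            assert (0 <= t / Cmod w) by (apply Rdiv_le_0_compat; lra). lra.
          * rewrite RtoC_plus. unfold Rdiv. rewrite RtoC_mult. ring. }
    destruct Hdir as [zeta [Hzeta Hwz]].
    set (u := (RtoC t * zeta)%C).
    assert (Hu : Cmod u = t) by (apply Cmod_scale_unit; lra).
    assert (Hc := Hconst u ltac:(lra)).
    assert (HvuS : Sset (v + u)%C).
    { split.
      - unfold B. replace (v + u - zs)%C with (w + RtoC t * zeta)%C by (unfold w, u; Cring). lra.
      - rewrite Hc. lra. }
    specialize (Hvmax _ HvuS).
    replace (v + u - zs)%C with (w + RtoC t * zeta)%C in Hvmax by (unfold w, u; Cring).
    rewrite Hwz in Hvmax. fold w in Hvmax. lra.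
Qed.


Lemma hurwitz c rho R0 z0 : 0 < rho < R0 -> ac c R0 -> c O <> RtoC 0 -> Cmod z0 < rho ->
  val c z0 = RtoC 0 ->
  exists delta, 0 < delta /\ forall e, ac e R0 ->
    (forall z, Cmod z <= rho -> Cmod (val c z - val e z)%C < delta) ->
    exists z, Cmod z <= rho /\ val e z = RtoC 0.
Proof.
  intros Hr Hac Hc0 Hz0 Hv0.
  destruct (min_zero c R0 rho z0 Hr Hac Hz0 Hv0) as [zs [Hzs1 [Hzs2 Hzs3]]].
  assert (Hzsnz : zs <> RtoC 0).
  { intros ->. rewrite val_0 in Hzs2. auto. }
  assert (Hzsr : Cmod zs < rho) by lra.
  destruct (local_exp c R0 rho zs Hr Hac Hzsr Hzs2 Hzsnz) as [m [E [Hm [HE Hloc]]]].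
  { intros t Ht1 Ht2. apply Hzs3; auto. lra. }
  destruct (circle_bound c R0 rho zs m E Hr Hac Hzsr HE Hloc) as [s [beta [Hs [Hs2 [Hb Hcirc]]]]].
  exists (beta / 3). split. lra.
  intros e Hace Hclose.
  apply NNPP. intros Hno.
  assert (Hnz : forall z, Cmod (z - zs)%C <= s -> val e z <> RtoC 0).
  { intros z Hz He. apply Hno. exists z. split; auto.
    replace z with ((z - zs) + zs)%C by Cring. eapply Rle_trans. apply Cmod_triangle. lra. }
  destruct (min_mod e R0 rho zs s Hr Hace Hs ltac:(lra) Hnz) as [z [Hz1 Hz2]].
  assert (Hzr : Cmod z <= rho).
  { replace z with ((z - zs) + zs)%C by Cring. eapply Rle_trans. apply Cmod_triangle. lra. }
  assert (H1 := Hcirc (z - zs)%C Hz1). replace (zs + (z - zs))%C with z in H1 by Cring.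
  assert (H2 := Hclose z Hzr). assert (H3 := Hclose zs ltac:(lra)).
  rewrite Hzs2 in H3. replace (RtoC 0 - val e zs)%C with (- val e zs)%C in H3 by Cring.
  rewrite Cmod_opp in H3.
  assert (H4 := Cmod_rev_tri (val c z) (val e z)). lra.
Qed.


Lemma sums_at_0 (c : coeffs) : sums_to c (RtoC 0) (c O).
Proof.
  unfold sums_to. eapply is_series_ext; [|apply (is_series_single O (c O))].
  intros k. destruct k; simpl; Cring.
Qed.

Lemma ac_minus (a b : coeffs) r : 0 <= r -> ac a r -> ac b r -> ac (fun k => a k - b k)%C r.
Proof.
  intros Hr Ha Hb. unfold ac.
  apply (ex_series_Rpos_le _ (fun k => Cmod (a k) * r ^ k + Cmod (b k) * r ^ k)).
  - intros k. assert (0 <= r ^ k) by (apply pow_le; auto).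
    assert (Cmod (a k - b k)%C <= Cmod (a k) + Cmod (b k)).
    { unfold Cminus. eapply Rle_trans. apply Cmod_triangle. rewrite Cmod_opp. lra. }
    assert (0 <= Cmod (a k - b k)%C) by apply Cmod_ge_0.
    split. apply Rmult_le_pos; auto. nra.
  - exact (ex_series_plus _ _ Ha Hb).
Qed.

Lemma closure_dual (V : coeffs -> Prop) (HV : forall f, V f -> in_A0 f) (g : coeffs) :
  closure_A (Tset (cm V)) g -> dual V g.
Proof.
  intros [HgA Hcl].
  assert (Hg0 : g O = RtoC 1).
  { apply Cminus_eq_0. apply Cmod_eq_0. apply Rle_antisym; [|apply Cmod_ge_0].
    apply le_epsilon. intros eps Heps. rewrite Rplus_0_l.
    destruct (Hcl 0 eps ltac:(lra) Heps) as [h [[[_ Hh0] _] [HhA Happ]]].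
    assert (H := Happ (RtoC 0) ltac:(rewrite Cmod_0; lra) _ _ (sums_at_0 h) (sums_at_0 g)).
    rewrite Hh0 in H. rewrite Cmod_sub_sym. lra. }
  split; [split; auto|].
  intros f Vf z Hz w Hw Hw0. subst w.
  destruct (HV f Vf) as [HfA Hf0].
  set (a := Cmod z).
  assert (Ha : 0 <= a) by apply Cmod_ge_0.
  assert (Ha1 : a < 1) by exact Hz.
  set (rho := a + (1 - a) / 4). set (r := a + (1 - a) / 2). set (R0 := a + 3 * (1 - a) / 4).
  set (c := hadamard f g).
  assert (Hacc : ac c R0). { apply had_ac. exact HfA. exact HgA. unfold R0. lra. }
  assert (Hc0 : c O <> RtoC 0).
  { unfold c, hadamard. rewrite Hf0, Hg0. intros H. injection H. lra. }
  assert (Hvz : val c z = RtoC 0).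
  { apply (sums_uniq c z). apply (ac_val c R0); auto. unfold R0, a; lra. exact Hw. }
  destruct (hurwitz c rho R0 z ltac:(unfold rho, R0; lra) Hacc Hc0 ltac:(unfold rho, a; lra) Hvz)
    as [delta [Hdelta Hhur]].
  set (q := rho / r).
  assert (Hq : 0 <= q < 1).
  { unfold q, rho, r. split. apply Rdiv_le_0_compat; lra. apply Rdiv_lt_1; lra. }
  set (K := Acst f q).
  assert (HfK : ac f q) by (apply inA_ac; auto).
  assert (HK : 0 <= K) by (apply Acst_nonneg; [lra|auto]).
  set (eps := delta / (2 * (K + 1))).
  assert (Heps : 0 < eps) by (unfold eps; apply Rdiv_lt_0_compat; lra).
  destruct (Hcl r eps ltac:(unfold r; lra) Heps) as [h [HhT [HhA Happ]]].
  assert (Hrpos : 0 < r) by (unfold r; lra).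
  set (d := fun k => (h k - g k)%C).
  assert (Hacd : ac d r).
  { apply ac_minus. lra. apply inA_ac; auto; unfold r; lra. apply inA_ac; auto; unfold r; lra. }
  assert (Hcd : forall k, Cmod (d k) * r ^ k <= eps).
  { apply cauchy_est; auto. intros z' Hz' u Hu.
    assert (Hh := ac_val h r z' ltac:(apply inA_ac; auto; unfold r; lra) ltac:(lra)).
    assert (Hg := ac_val g r z' ltac:(apply inA_ac; auto; unfold r; lra) ltac:(lra)).
    assert (Hm := is_series_minus _ _ _ _ Hh Hg).
    assert (E : u = (val h z' - val g z')%C).
    { apply (is_series_C_uniq (fun k => d k * z' ^ k)%C). exact Hu.
      eapply is_series_ext; [|exact Hm]. intros k. unfold d. change (Cplus (h k * z' ^ k) (Copp (g k * z' ^ k)) = ((h k - g k) * z' ^ k))%C. Cring. }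
    rewrite E. apply Rlt_le. apply (Happ z'); auto. lra. }
  set (e := hadamard f h).
  assert (Hace : ac e R0) by (apply had_ac; auto; unfold R0; lra).
  destruct (Hhur e Hace) as [z1 [Hz1 Hez1]].
  - intros z' Hz'.
    assert (Hc := ac_val c R0 z' Hacc ltac:(unfold R0, rho in *; lra)).
    assert (He := ac_val e R0 z' Hace ltac:(unfold R0, rho in *; lra)).
    assert (Hm := is_series_minus _ _ _ _ Hc He).
    eapply Rle_lt_trans.
    + apply (series_Cmod_le _ _ (fun k => eps * (Cmod (f k) * q ^ k)) Hm).
      * intros k. change (Cmod (c k * z' ^ k - e k * z' ^ k)%C <= eps * (Cmod (f k) * q ^ k)).
        replace (c k * z' ^ k - e k * z' ^ k)%C with (f k * (- d k) * z' ^ k)%C by (unfold c, e, d, hadamard; Cring).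
        rewrite Cmod_term, Cmod_mult, Cmod_opp.
        assert (Hdk := Hcd k).
        assert (Hrk : 0 < r ^ k) by (apply pow_lt; lra).
        assert (Hdk' : Cmod (d k) <= eps / r ^ k).
        { apply (Rmult_le_reg_r (r ^ k)); auto. unfold Rdiv. rewrite Rmult_assoc, Rinv_l by lra. lra. }
        assert (Hzk : Cmod z' ^ k <= rho ^ k) by (apply pow_incr; split; [apply Cmod_ge_0|auto]).
        assert (0 <= Cmod (f k)) by apply Cmod_ge_0.
        assert (0 <= Cmod (d k)) by apply Cmod_ge_0.
        assert (0 <= Cmod z' ^ k) by (apply pow_le; apply Cmod_ge_0).
        apply Rle_trans with (Cmod (f k) * (eps / r ^ k) * rho ^ k).
        { apply Rmult_le_compat; try nra; try (apply Rmult_le_compat_l; auto). }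
        unfold q. rewrite Rpow_div_l by lra. right. field. lra.
      * apply ex_series_Rscal_l. exact HfK.
    + rewrite Series_scal_l. change (Series (fun n => Cmod (f n) * q ^ n)) with K. unfold eps.
      apply (Rmult_lt_reg_r (2 * (K + 1))). lra.
      replace (delta / (2 * (K + 1)) * K * (2 * (K + 1))) with (delta * K) by (field; lra). nra.
  - destruct HhT as [_ HhT].
    apply (HhT (Pmap z1 f)) with (w := val e z1).
    + exists f, z1. split; auto. split; auto. unfold rho, a in Hz1. lra.
    + assert (H := ac_val e R0 z1 Hace ltac:(unfold R0, rho in *; lra)).
      unfold sums_to. eapply is_series_ext; [|exact H].
      intros k. unfold e, hadamard, Pmap. rewrite Cpow_1_l. Cring.
    + exact Hez1.
Qed.

Theorem theorem1 (V : coeffs -> Prop) (HV : forall f, V f -> in_A0 f) :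
  forall g : coeffs, dual V g <-> closure_A (Tset (cm V)) g.
Proof.
  intros g. split.
  - apply dual_closure.
  - apply closure_dual. exact HV.
Qed.
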